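(* Let $G$ be a non-abelian finite simple group such that $\mathrm{Aut}(G)$ is a split extension of $\mathrm{Inn}(G)$ by a group of order $2$. Then $G$ has the eigenvalue one property.
   Context: A finite group $K$ has the eigenvalue one property if for every irreducible non-trivial $\mathbb{R}K$-module $W$ of odd dimension, affording $\sigma\colon K\to\mathrm{GL}(W)$, and every $m\in N_{\mathrm{GL}(W)}(\sigma(K))$ of finite order, there is $k\in K$ such that $\sigma(k)m$ has eigenvalue $1$. *)

(* Defs.v *)
From HB Require Import structures.
From mathcomp Require Import all_boot all_order all_algebra all_fingroup all_solvable.
From mathcomp Require Import mxrepresentation.
From mathcomp Require Import Rstruct.
From Stdlib Require Rdefinitions.

Set Implicit Arguments.
Unset Strict Implicit.
Unset Printing Implicit Defensive.

Import GRing.Theory.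
Local Open Scope ring_scope.
Notation R := Rdefinitions.R.

Definition Inn (gT : finGroupType) (G : {group gT}) : {set {perm gT}} :=
  (conj_aut G @* G)%g.

Definition aut_split_by_order2 (gT : finGroupType) (G : {group gT}) : Prop :=
  exists T : {group {perm gT}}, #|T| = 2%N /\ (Inn G ><| T = Aut G)%g.

Definition normalizes_image (gT : finGroupType) (K : {group gT}) (n : nat)
    (rG : mx_representation R K n) (m : 'M[R]_n) : Prop :=
  m \in unitmx /\
  (forall k, k \in K -> exists2 h, h \in K & m *m rG k *m invmx m = rG h) /\
  (forall h, h \in K -> exists2 k, k \in K & m *m rG k *m invmx m = rG h).

(* Irreducible RK-modules of dimension n are the irreducible matrix
   representations K -> GL_n(R) (row-vector convention of MathComp);
   "non-trivial" means sigma is not the trivial representation. *)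
Definition eigenvalue_one_property (gT : finGroupType) (K : {group gT}) : Prop :=
  forall (n : nat) (rG : mx_representation R K n),
    odd n ->
    mx_irreducible rG ->
    (exists2 g, g \in K & rG g != 1%:M) ->
    forall m : 'M[R]_n,
      normalizes_image rG m ->
      (exists2 e, (0 < e)%N & m ^+ e = 1%:M) ->
      exists2 k, k \in K & eigenvalue (rG k *m m) 1.

(* Main.v *)
Require Import Defs.
From mathcomp Require Import all_boot all_order all_algebra all_fingroup all_solvable.
From mathcomp Require Import mxrepresentation polyrcf.
From mathcomp Require Import Rstruct.
Set Implicit Arguments. Unset Strict Implicit. Unset Printing Implicit Defensive.
Import Order.TTheory GRing.Theory Num.Theory.
Local Open Scope group_scope.
Lemma dvd2_odd d : d %| 2 -> odd d -> d = 1%N.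
Proof. by move=> /(@dvdn_leq _ 2 isT); case: d => [|[|[|d]]]. Qed.

Lemma conj_fixX (gT : finGroupType) (g y : gT) k : g ^ y = g -> g ^ (y ^+ k) = g.
Proof.
move=> gy; elim: k => [|k IH]; first by rewrite expg0 conjg1.
by rewrite expgS conjgM gy IH.
Qed.

Lemma odd_not_real (gT : finGroupType) (G : {group gT}) g x :
  odd #|G| -> g \in G -> x \in G -> g ^ x = g^-1 -> g = 1.
Proof.
move=> oG Gg Gx gx.
have ox : odd #[x] by apply: (dvdn_odd (order_dvdG Gx) oG).
have x2 : g ^ (x ^+ 2) = g by rewrite expgS expg1 conjgM gx conjVg gx invgK.
have xk : x = (x ^+ 2) ^+ (#[x].+1./2).
  rewrite -expgM mul2n.
  have -> : (#[x].+1./2).*2 = #[x].+1.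
    by rewrite -{2}(odd_double_half #[x].+1) /= ox.
  by rewrite expgSr expg_order mul1g.
have gx1 : g ^ x = g by rewrite xk; apply: conj_fixX.
have g2 : g ^+ 2 = 1 by rewrite expgS expg1 -{1}gx1 gx mulVg.
have og : #[g] %| 2 by rewrite order_dvdn g2.
have og1 := dvd2_odd og (dvdn_odd (order_dvdG Gg) oG).
by apply/eqP; rewrite -order_eq1 og1.
Qed.
Definition Pset (gT : finGroupType) (G : {group gT}) : {set gT} :=
  [set g in G | (enum_rank (repr (g ^: G)) < enum_rank (repr (g^-1 ^: G)))%N].

Lemma Pset_sub (gT : finGroupType) (G : {group gT}) : Pset G \subset G.
Proof. by apply/subsetP => g; rewrite inE => /andP[]. Qed.

Lemma PsetJ (gT : finGroupType) (G : {group gT}) g h : h \in G ->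
  (g ^ h \in Pset G) = (g \in Pset G).
Proof.
by move=> Gh; rewrite !inE groupJr // -conjVg !classGidl.
Qed.

Lemma Pset1 (gT : finGroupType) (G : {group gT}) : 1 \notin Pset G.
Proof. by rewrite inE invg1 ltnn andbF. Qed.

Lemma PsetV (gT : finGroupType) (G : {group gT}) g :
  odd #|G| -> g \in G -> g != 1 -> (g^-1 \in Pset G) = (g \notin Pset G).
Proof.
move=> oG Gg ng.
have ne : repr (g ^: G) != repr (g^-1 ^: G).
  apply/eqP => eqr.
  have r1 : repr (g ^: G) \in g ^: G by apply: mem_repr; apply: class_refl.
  have r2 : repr (g^-1 ^: G) \in g^-1 ^: G by apply: mem_repr; apply: class_refl.
  rewrite eqr in r1.
  case/imsetP: r1 => a Ga ea; case/imsetP: r2 => b Gb eb.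
  have : g ^ (a * b^-1) = g^-1 by rewrite conjgM -ea eb conjgK.
  move/(odd_not_real oG Gg (groupM Ga (groupVr Gb))) => g1.
  by rewrite g1 eqxx in ng.
have ner : enum_rank (repr (g ^: G)) != enum_rank (repr (g^-1 ^: G)).
  by apply: contra ne => /eqP /enum_rank_inj ->.
rewrite !inE groupV Gg invgK /= -leqNgt ltn_neqAle.
by rewrite eq_sym [_ != _]ner.
Qed.

Lemma sum_Pset (M : nmodType) (gT : finGroupType) (G : {group gT}) (F : gT -> M) :
  odd #|G| ->
  (\sum_(g in G) F g = F 1%g + \sum_(g in Pset G) F g + \sum_(g in Pset G) F (g^-1)%g)%R.
Proof.
move=> oG.
rewrite (bigD1 1) ?group1 //= -GRing.addrA; congr (_ + _)%R.
rewrite (bigID (fun g => g \in Pset G)) /=; congr (_ + _)%R.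
  apply: eq_bigl => g; case Pg: (g \in Pset G); last by rewrite !andbF.
  have Gg := subsetP (Pset_sub G) g Pg.
  by rewrite Gg andbT /=; apply: contraTneq Pg => ->; exact: Pset1.
rewrite (reindex_inj invg_inj) /=.
apply: eq_bigl => g; rewrite groupV.
case Gg: (g \in G) => /=; last first.
  by apply/esym/negP => /(subsetP (Pset_sub G)); rewrite Gg.
case: (eqVneq g 1) => [->|ng].
  by rewrite invg1 eqxx; apply/esym/negbTE/Pset1.
rewrite eq_invg1 ng /= -(PsetV oG) ?groupV ?invgK //.
by rewrite eq_invg1.
Qed.
Local Open Scope ring_scope.
Lemma odd_central (gT : finGroupType) (G : {group gT}) n
  (rG : mx_representation R G n) (c : 'M[R]_n) :
  odd n -> mx_irreducible rG -> centgmx rG c -> exists a, c = a%:M.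
Proof.
move=> on irr cc.
have hs : ~~ odd (size (char_poly c)) by rewrite size_char_poly /= negbK.
have [a Ha] := @odd_poly_root R (char_poly c) hs.
exists a.
have ev : eigenvalue c a by rewrite eigenvalue_root_char.
have modU : mxmodule rG (eigenspace c a).
  apply/mxmoduleP => x Gx; apply: comm_mx_stable_eigenspace.
  by rewrite /comm_mx (centgmxP cc).
have [_ /(_ _ modU ev)] := (mx_irrP rG).1 irr.
rewrite -sub1mx => /sub_kermxP; rewrite mul1mx => /eqP.
by rewrite subr_eq0 => /eqP.
Qed.
Lemma faithful_simple (gT : finGroupType) (G : {group gT}) n
  (rG : mx_representation R G n) :
  simple G -> (exists2 g, g \in G & rG g != 1%:M) -> mx_faithful rG.
Proof.
move=> /simpleP [_ sG] [g Gg ng].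
have [rk1|eqG] := sG (rker_group rG) (rker_normal rG).
  by rewrite /mx_faithful -[rker rG]/(gval (rker_group rG)) rk1.
suff : g \in rker rG by case/rkerP => _ /eqP; rewrite (negPf ng).
by rewrite -[rker rG]/(gval (rker_group rG)) eqG.
Qed.

Lemma sum_repr_mulr (gT : finGroupType) (G : {group gT}) n
  (rG : mx_representation R G n) h : h \in G ->
  (\sum_(g in G) rG g) *m rG h = \sum_(g in G) rG g.
Proof.
move=> Gh; rewrite mulmx_suml.
rewrite (reindex_inj (mulIg (h^-1)%g)) /=.
apply: eq_big => [g|g Gg]; first by rewrite groupMr ?groupV.
rewrite -repr_mxM ?mulgKV //.
Qed.

Lemma sum_repr0 (gT : finGroupType) (G : {group gT}) n
  (rG : mx_representation R G n) :
  mx_irreducible rG -> (exists2 g, g \in G & rG g != 1%:M) ->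
  \sum_(g in G) rG g = 0.
Proof.
move=> irr [g Gg ng].
have fix0 : rfix_mx rG G = 0.
  apply/eqP/negP => /negP nz.
  have [_ /(_ _ (rfix_mx_module rG) nz)] := (mx_irrP rG).1 irr.
  rewrite -sub1mx => /rfix_mxP /(_ g Gg); rewrite mul1mx => /eqP.
  by rewrite (negPf ng).
have : ((\sum_(g in G) rG g)%R <= rfix_mx rG G)%MS.
  by apply/rfix_mxP => x Gx; exact: sum_repr_mulr.
by rewrite fix0 submx0 => /eqP.
Qed.
Lemma tr_mul_tr_ge0 n (M : 'M[R]_n) : 0 <= \tr (M *m M^T).
Proof.
rewrite /mxtrace; apply: sumr_ge0 => i _; rewrite mxE.
apply: sumr_ge0 => j _; rewrite mxE -expr2; exact: sqr_ge0.
Qed.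

Lemma tr_reprV (gT : finGroupType) (G : {group gT}) n
  (rG : mx_representation R G n) g :
  mx_irreducible rG -> g \in G -> \tr (rG (g^-1)%g) = \tr (rG g).
Proof.
move=> irr Gg.
set B := \sum_(x in G) rG x *m (rG x)^T.
have inv h : h \in G -> rG h *m B *m (rG h)^T = B.
  move=> Gh; rewrite /B mulmx_sumr mulmx_suml.
  rewrite [RHS](reindex_inj (mulgI h)) /=.
  apply: eq_big => [x|x Gx]; first by rewrite groupMl.
  by rewrite repr_mxM // trmx_mul !mulmxA.
have [n0 irrU] := (mx_irrP rG).1 irr.
have uB : B \in unitmx.
  rewrite -row_free_unit -kermx_eq0; apply/negP => /negP nz.
  have modK : mxmodule rG (kermx B).
    apply/mxmoduleP => x Gx; apply/sub_kermxP; rewrite -mulmxA.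
    have -> : rG x *m B = B *m (rG (x^-1)%g)^T.
      by rewrite -{1}(inv _ (groupVr Gx)) !mulmxA -repr_mxM ?groupV // mulgV repr_mx1 mul1mx.
    by rewrite mulmxA mulmx_ker mul0mx.
  have := irrU _ modK nz; rewrite -sub1mx => /sub_kermxP; rewrite mul1mx => B0.
  have : 0 < \tr B.
    rewrite /B raddf_sum (bigD1 1%g) ?group1 //= repr_mx1 trmx1 mulmx1 mxtrace1.
    apply: (@lt_le_trans _ _ n%:R); first by rewrite ltr0n.
    rewrite lerDl.
    by apply: sumr_ge0 => x _; exact: tr_mul_tr_ge0.
  by rewrite B0 linear0 ltxx.
have uG := repr_mx_unit rG Gg.
rewrite repr_mxV //.
have -> : invmx (rG g) = B *m (rG g)^T *m invmx B.
  have E : rG g *m (B *m (rG g)^T *m invmx B) = 1%:M.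
    by rewrite !mulmxA (inv _ Gg) mulmxV.
  by rewrite -[LHS]mulmx1 -E mulKmx.
by rewrite mxtrace_mulC mulKmx // mxtrace_tr.
Qed.

Lemma parity (gT : finGroupType) (G : {group gT}) n
  (rG : mx_representation R G n) :
  odd #|G| -> odd n -> mx_irreducible rG ->
  (exists2 g, g \in G & rG g != 1%:M) -> False.
Proof.
move=> oG on irr ntriv.
have [n0 _] := (mx_irrP rG).1 irr.
have nR : (n%:R : R) != 0 by rewrite pnatr_eq0 -lt0n.
set P := Pset G.
have sPG := subsetP (Pset_sub G).
set S := \sum_(g in P) rG g.
have cS : centgmx rG S.
  apply/centgmxP => x Gx; rewrite /S mulmx_suml mulmx_sumr.
  rewrite [RHS](reindex_inj (conjg_inj x)) /=.
  apply: eq_big => [g|g Pg]; first by rewrite PsetJ.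
  have Gg := sPG g Pg.
  rewrite -!repr_mxM ?groupJ //; congr (rG _).
  by rewrite conjgE !mulgA mulgV mul1g.
have [lam Slam] := odd_central on irr cS.
have trS : \tr S = lam * n%:R by rewrite Slam mxtrace_scalar mulr_natr.
have sum0 := sum_repr0 irr ntriv.
have : \tr (\sum_(g in G) rG g) = 0 by rewrite sum0 linear0.
rewrite raddf_sum (sum_Pset (fun g => \tr (rG g)) oG) /= repr_mx1 mxtrace1.
have -> : \sum_(g in P) \tr (rG (g^-1)%g) = \tr S.
  rewrite /S raddf_sum; apply: eq_bigr => g Pg; exact: tr_reprV (sPG g Pg).
rewrite -raddf_sum -/S => E0.
have E : n%:R + lam * n%:R + lam * n%:R = 0 :> R by rewrite -trS; exact: E0.
have lam2 : 1 + lam *+ 2 = 0.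
  have : (1 + lam *+ 2) * n%:R = 0.
    by rewrite mulrDl mul1r mulrnAl -E mulr2n addrA.
  by move/eqP; rewrite mulf_eq0 (negPf nR) orbF => /eqP.
have key h : h \in G ->
    \sum_(g in P) \tr (rG (g * h)%g) = lam * \tr (rG h).
  move=> Gh; have : \tr (S *m rG h) = lam * \tr (rG h).
    by rewrite Slam mul_scalar_mx mxtraceZ.
  rewrite /S mulmx_suml raddf_sum => <-; apply: eq_bigr => g Pg.
  by rewrite repr_mxM // sPG.
pose Nz : 'M[int]_#|G| :=
  \matrix_(i, j) (((enum_val j * (enum_val i)^-1)%g \in P)%:R).
pose Mz := Nz *+ 2 + 1%:M.
pose u : 'cV[R]_#|G| := \col_i \tr (rG (enum_val i)).
have Mu : map_mx (intr : int -> R) Mz *m u = 0.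
  apply/matrixP => i k; rewrite !mxE.
  under eq_bigr do rewrite !mxE !intrD !rmorph_nat -mulr2n mulrDl.
  rewrite big_split /=.
  have -> : \sum_(j < #|G|) (i == j)%:R * \tr (rG (enum_val j)) = \tr (rG (enum_val i)).
    rewrite (bigD1 i) //= eqxx mul1r big1 ?addr0 // => j /negPf.
    by rewrite eq_sym => ->; rewrite mul0r.
  set h := enum_val i.
  have Gh : h \in G by apply: enum_valP.
  have -> : \sum_(j < #|G|) ((enum_val j * h^-1)%g \in P)%:R *+ 2 * \tr (rG (enum_val j))
            = (\sum_(j < #|G| | (enum_val j * h^-1)%g \in P) \tr (rG (enum_val j))) *+ 2.
    rewrite -sumrMnl [RHS]big_mkcond /=; apply: eq_bigr => j _.
    case: ((enum_val j * h^-1)%g \in P) => /=; first by rewrite mulr1n mulrnAl mul1r.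
    by rewrite mulr0n mul0rn mul0r.
  rewrite -(big_enum_val_cond (fun k => (k * h^-1)%g \in P) (fun k => \tr (rG k))).
  rewrite (reindex_inj (mulIg h)) /=.
  rewrite (eq_bigl (fun g => g \in P)); last first.
    move=> g; rewrite mulgK; case Pg: (g \in P); last by rewrite andbF.
    by rewrite andbT (groupMr _ Gh) sPG.
  by rewrite key // -mulrnAl -[X in _ + X]mul1r -mulrDl addrC lam2 mul0r.
have G1 : (1%g : gT) \in G := group1 G.
have uNZ : u != 0.
  apply/eqP => /matrixP /(_ (enum_rank_in G1 1%g) 0); rewrite !mxE.
  by rewrite enum_rankK_in // repr_mx1 mxtrace1 => /eqP; rewrite (negPf nR).
have dR : \det (map_mx (intr : int -> R) Mz) = 0.
  apply/eqP; apply: contraR uNZ => nz.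
  have uM : map_mx (intr : int -> R) Mz \in unitmx by rewrite unitmxE unitfE.
  by rewrite -(mulKmx uM u) Mu mulmx0.
have dZ : \det Mz = 0.
  by apply/eqP; rewrite -(intr_eq0 R) -det_map_mx dR.
have M2 : map_mx (intr : int -> 'Z_2) Mz = 1%:M.
  apply/matrixP => i j; rewrite !mxE !intrD !rmorph_nat -mulr2n.
  have z2 (x : 'Z_2) : x *+ 2 = 0 by rewrite -mulr_natr pchar_Zp // mulr0.
  by rewrite z2 add0r.
have : \det (map_mx (intr : int -> 'Z_2) Mz) = 0 by rewrite det_map_mx dZ rmorph0.
by rewrite M2 det1 => /eqP; rewrite oner_eq0.
Qed.

Lemma neg_eigen (gT : finGroupType) (G : {group gT}) n
  (rG : mx_representation R G n) :
  odd n -> mx_irreducible rG -> mx_faithful rG ->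
  (exists2 g, g \in G & rG g != 1%:M) ->
  exists2 g, g \in G & exists2 v : 'rV[R]_n, v *m rG g = - v & v != 0.
Proof.
move=> on irr ff ntriv.
case: (boolP (odd #|G|)) => oG; first by case: (parity oG on irr ntriv).
have d2 : (2 %| #|G|)%N by rewrite dvdn2.
have [t Gt ot] := @Cauchy _ 2 G isT d2.
have G1 : (1%g : gT) \in G := group1 G.
have tt : (t * t)%g = 1%g.
  by have := expg_order t; rewrite ot expgS expg1.
have nt : rG t != 1%:M.
  apply/eqP => e; have : t = 1%g.
    by apply: (mx_faithful_inj ff) => //; rewrite e repr_mx1.
  by move=> t1; move: ot; rewrite t1 order1.
exists t => //.
have D0 : rG t - 1%:M != 0 by rewrite subr_eq0.
have [v sv nv] := rowV0Pn D0.
exists v => //.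
have [w ->] := submxP sv.
have -> : w *m (rG t - 1%:M) *m rG t = w *m (1%:M - rG t).
  by rewrite -mulmxA mulmxBl -repr_mxM // tt repr_mx1 mul1mx.
by rewrite -mulmxN opprB.
Qed.

Lemma detX n (A : 'M[R]_n) k : \det (A ^+ k) = \det A ^+ k.
Proof.
elim: k => [|k IH]; first by rewrite !expr0 det1.
by rewrite !exprS -mulmxE det_mulmx IH.
Qed.

Lemma detsq n (A : 'M[R]_n) k : (0 < k)%N -> A ^+ k = 1%:M -> \det A ^+ 2 = 1.
Proof.
move=> k0 Ak; apply/eqP; rewrite -(pexpr_eq1 k0) ?sqr_ge0 //.
by rewrite exprAC -detX Ak det1 expr1n.
Qed.

Lemma reprX (gT : finGroupType) (G : {group gT}) n
  (rG : mx_representation R G n) x k : x \in G -> rG (x ^+ k)%g = rG x ^+ k.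
Proof.
move=> Gx; elim: k => [|k IH]; first by rewrite expg0 expr0 repr_mx1.
by rewrite expgS exprS repr_mxM ?groupX // IH mulmxE.
Qed.

Unset Implicit Arguments.
Theorem lemma4p4p2 (gT : finGroupType) (G : {group gT}) :
  simple G -> ~~ abelian G -> aut_split_by_order2 G ->
  eigenvalue_one_property G.
Proof.
move=> sG _ [T [cT sd]] n rG on irr ntriv m [um [fw bw]] [e e0 me].
have ff := faithful_simple sG ntriv.
have inj := mx_faithful_inj ff.
have [n0 _] := (mx_irrP rG).1 irr.
pose alpha (k : gT) : gT :=
  if k \in G then odflt 1%g [pick h in G | m *m rG k *m invmx m == rG h] else k.
have alphaP k : k \in G -> alpha k \in G /\ rG (alpha k) = m *m rG k *m invmx m.
  move=> Gk; rewrite /alpha Gk; case: pickP => [h /andP[Gh /eqP E]|none] /=.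
    by [].
  by have [h Gh E] := fw k Gk; have := none h; rewrite Gh E eqxx.
have alphaG k : k \in G -> alpha k \in G by case/alphaP.
have alphaE k : k \in G -> rG (alpha k) = m *m rG k *m invmx m by case/alphaP.
have alphaM : {in G &, {morph alpha : x y / (x * y)%g}}.
  move=> x y Gx Gy; apply: inj.
  - exact: alphaG (groupM Gx Gy).
  - exact: groupM (alphaG _ Gx) (alphaG _ Gy).
  rewrite repr_mxM ?alphaG // !alphaE ?groupM // repr_mxM //.
  by rewrite !mulmxA mulmxKV.
pose am := @Morphism gT gT G alpha alphaM.
have injam : ('injm am)%g.
  apply/injmP => x y Gx Gy /= exy; apply: inj => //.
  have := congr1 (fun M => invmx m *m M *m m) (congr1 rG exy).
  by rewrite /= !alphaE // !mulmxA !mulmxKV // mulVmx // !mul1mx.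
have imam : (am @* G)%g = G.
  apply/eqP; rewrite eqEcard card_injm // leqnn andbT.
  by apply/subsetP => y /morphimP [x _ Gx ->]; exact: alphaG.
have aA := Aut_aut injam imam.
have aE := autE injam imam.
have ITA := sdprodW sd.
have : aut injam imam \in (Inn G * T)%g by rewrite ITA.
case/mulsgP => i t Ii Tt ait.
case/morphimP: Ii => k0 Nk0 Gk0 ik0.
have tA : t \in Aut G by rewrite -ITA; apply: (subsetP (mulG_subr _ _)).
have tG y : y \in G -> t y \in G by move=> Gy; exact: Aut_closed.
have alphat x : x \in G -> alpha x = t (x ^ k0)%g.
  move=> Gx; rewrite -[alpha x]/(am x) -aE // ait permM ik0.
  by rewrite norm_conj_autE.
have tt y : t (t y) = y.
  have t2 : (t * t)%g = 1%g.
    by have := expg_cardG Tt; rewrite cT expgS expg1.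
  by rewrite -permM t2 perm1.
pose m1 := m *m rG k0.
have m1rel y : y \in G -> m1 *m rG y = rG (t y) *m m1.
  move=> Gy; have Gy' : (y ^ k0^-1)%g \in G by rewrite groupJ ?groupV.
  have -> : t y = alpha (y ^ k0^-1)%g by rewrite alphat // conjgKV.
  rewrite alphaE // /m1 -!mulmxA -!repr_mxM // ?groupV //.
  by rewrite mulKmx // -repr_mxM ?groupV // conjgE invgK mulgA mulgKV.
have cm2 : centgmx rG (m1 *m m1).
  apply/centgmxP => x Gx.
  by rewrite -mulmxA m1rel // mulmxA m1rel ?tG // tt -mulmxA.
have [mu Emu] := odd_central on irr cm2.
have d1 := detsq e0 me.
have d2 : \det (rG k0) ^+ 2 = 1.
  apply: (detsq (cardG_gt0 G)).
  by rewrite -reprX // expg_cardG // repr_mx1.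
have mun : mu ^+ n = 1.
  have : \det (m1 *m m1) = mu ^+ n by rewrite Emu det_scalar.
  by rewrite det_mulmx /m1 det_mulmx -expr2 exprMn d1 d2 mulr1.
have mu1 : mu = 1.
  have mupos : 0 < mu by rewrite -(exprn_odd_gt0 _ on) mun ltr01.
  by apply/eqP; rewrite -(pexpr_eq1 n0) ?ltW // mun.
have m1sq : m1 *m m1 = 1%:M by rewrite Emu mu1.
case: (boolP (eigenvalue m1 1)) => [ev|nev].
  exists k0 => //.
  case/eigenvalueP: ev => v vm1 nv.
  apply/eigenvalueP; exists (v *m m).
    by rewrite mulmxA -(mulmxA v m) -/m1 vm1 !scale1r.
  apply: contra nv => /eqP vm0; apply/eqP.
  by rewrite -(mulmxK um v) vm0 mul0mx.
have u1 : m1 - 1%:M \in unitmx.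
  by rewrite -row_free_unit -kermx_eq0; move: nev; rewrite /eigenvalue /eigenspace negbK.
have m1N : m1 = - 1%:M.
  have : (m1 - 1%:M) *m (m1 + 1%:M) = 0.
    by rewrite mulmxDr mulmx1 mulmxBl mul1mx m1sq addrA subrK subrr.
  move/(congr1 (mulmx (invmx (m1 - 1%:M)))); rewrite mulKmx // mulmx0.
  by move/eqP; rewrite addr_eq0 => /eqP.
have uk := repr_mx_unit rG Gk0.
have rm : rG k0 *m m = - 1%:M.
  have mE : m = - invmx (rG k0).
    by rewrite -[m](mulmxK uk) -/m1 m1N mulNmx mul1mx.
  by rewrite mE mulmxN mulmxV.
have [g Gg [v vg nv]] := neg_eigen on irr ff ntriv.
exists (g * k0)%g; first by rewrite groupM.
apply/eigenvalueP; exists v => //.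
by rewrite repr_mxM // -mulmxA rm mulmxN mulmx1 mulmxN vg opprK scale1r.
Qed.
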